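(* Let $\mathcal{C}$ be an $(n,s)$-curve of genus $g$ and let $D_g$ be a non-special positive divisor of degree $g$ on the finite part of $\mathcal{C}$. Let $\mathcal{R}_{2g}$ be the polynomial function of weight $2g$ with $D_g\subset(\mathcal{R}_{2g})_0$, and let $D_g^\ast$ be the complement of $D_g$ in $(\mathcal{R}_{2g})_0$, i.e. $(\mathcal{R}_{2g})_0=D_g+D_g^\ast$. Then $D_g^\ast$ is the inverse of $D_g$: $D_g^\ast-g\infty\sim-(D_g-g\infty)$.
   Context: An $(n,s)$-curve ($\gcd(n,s)=1$) is a nonsingular plane curve $f(x,y)=-y^n+x^s+\sum_{ni+sj<ns,\ j\le n-1}\lambda_{ns-ni-sj}x^iy^j=0$ over $\mathbb{C}$ of genus $g=(n-1)(s-1)/2$ with one point $\infty$ at infinity. Sato weights: $\mathrm{wgt}\,x=n$, $\mathrm{wgt}\,y=s$. A polynomial function of weight $\mathfrak{w}$ is an element of $\mathbb{C}[x,y]/(f)$ that is a linear combination of monomials $x^iy^j$ ($j\le n-1$) of weight $ni+sj\le\mathfrak{w}$ with coefficient $1$ at the (unique) monomial of weight $\mathfrak{w}$; its divisor of zeros $(\mathcal{R})_0$ is the divisor of common solutions of $\mathcal{R}=0$, $f=0$, of degree $\mathfrak{w}$. Non-special means $\ell(K_{\mathcal{C}}-D_g)=0$. $\sim$ denotes linear equivalence. *)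

(* Defs.v *)
(* Plane (n,s)-curves over C := R[i] (R : realType),
   bivariate polynomials as {poly {poly C}}: for p, p`_j`_i is the
   coefficient of x^i y^j (outer variable = y, inner variable = x). *)
From mathcomp Require Import all_boot all_order all_algebra.
From mathcomp Require Import reals complex.
Set Implicit Arguments. Unset Strict Implicit. Unset Printing Implicit Defensive.
Import Order.TTheory GRing.Theory Num.Theory.
Local Open Scope ring_scope.

Section NSCurves.
Variable C : closedFieldType.

Definition bipoly := {poly {poly C}}.

Definition coef2 (p : bipoly) (i j : nat) : C := p`_j`_i.

Definition eval2 (p : bipoly) (a b : C) : C := (p.[b%:P]).[a].

Definition dX (p : bipoly) : bipoly := map_poly (fun c : {poly C} => c^`()) p.
Definition dY (p : bipoly) : bipoly := p^`().

Definition shift2 (p : bipoly) (a b : C) : bipoly :=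
  (map_poly (fun c : {poly C} => c \Po ('X + a%:P)) p) \Po ('X + (b%:P)%:P).

(* p belongs to the k-th power of the maximal ideal (x - a, y - b) *)
Definition in_mpow (a b : C) (k : nat) (p : bipoly) : Prop :=
  forall i j : nat, (i + j < k)%N -> coef2 (shift2 p a b) i j = 0.

Definition wgt (n s i j : nat) : nat := (n * i + s * j)%N.

Definition ns_curve (n s : nat) (f : bipoly) : Prop :=
  [/\ (0 < n)%N, (0 < s)%N & coprime n s] /\
  [/\ coef2 f s 0 = 1, coef2 f 0 n = -1,
      (forall i j : nat, (i, j) != (s, 0%N) -> (i, j) != (0%N, n) ->
          ~~ ((wgt n s i j < n * s)%N && (j <= n.-1)%N) -> coef2 f i j = 0)
    & (forall a b : C,
          ~ [/\ eval2 f a b = 0, eval2 (dX f) a b = 0 & eval2 (dY f) a b = 0])].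

Definition genus (n s : nat) : nat := ((n.-1 * s.-1)./2)%N.

Definition oncurve (f : bipoly) (P : C * C) : Prop := eval2 f P.1 P.2 = 0.

(* p is zero as a function on the curve, i.e. p lies in the ideal (f) *)
Definition divides (f p : bipoly) : Prop := exists q : bipoly, p = q * f.

(* order of vanishing of the polynomial function h at the affine point P
   of the curve (computed in the local ring O_P = C[x,y]_{m_P}/(f)) is k *)
Definition in_local_mpow (f : bipoly) (P : C * C) (k : nat) (h : bipoly) : Prop :=
  exists u q : bipoly, eval2 u P.1 P.2 != 0 /\ in_mpow P.1 P.2 k (u * h - q * f).

Definition ord_at (f : bipoly) (P : C * C) (h : bipoly) (k : nat) : Prop :=
  in_local_mpow f P k h /\ ~ in_local_mpow f P k.+1 h.

(* the polynomial function h (mod f) has Sato weight w, i.e. its reduced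
   representative (y-degree <= n-1) has top monomial of weight w;
   equivalently ord_infinity h = - w *)
Definition pweight (n s : nat) (f h : bipoly) (w : nat) : Prop :=
  exists r q : bipoly,
    [/\ h = r + q * f, (size r <= n)%N, r != 0,
        (exists i j : nat, coef2 r i j != 0 /\ wgt n s i j = w)
      & (forall i j : nat, coef2 r i j != 0 -> (wgt n s i j <= w)%N)].

Definition polyfun (n s w : nat) (R : bipoly) : Prop :=
  [/\ (size R <= n)%N,
      (forall i j : nat, coef2 R i j != 0 -> (wgt n s i j <= w)%N)
    & (forall i j : nat, (j <= n.-1)%N -> wgt n s i j = w -> coef2 R i j = 1)].

(* divisors: (multiplicities at affine points, multiplicity at infinity) *)
Definition divisor : Type := (((C * C) -> int) * int)%type.

Definition addD (D E : divisor) : divisor := (fun P => D.1 P + E.1 P, D.2 + E.2).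
Definition oppD (D : divisor) : divisor := (fun P => - D.1 P, - D.2).
Definition subD (D E : divisor) : divisor := addD D (oppD E).
Definition infD (k : int) : divisor := (fun _ => 0, k).

Definition is_divisor (f : bipoly) (D : divisor) : Prop :=
  (exists sp : seq (C * C), forall P, D.1 P != 0 -> P \in sp) /\
  (forall P, D.1 P != 0 -> oncurve f P).

Definition effective (D : divisor) : Prop := (forall P, 0 <= D.1 P) /\ 0 <= D.2.

Definition le_div (D E : divisor) : Prop := (forall P, D.1 P <= E.1 P) /\ D.2 <= E.2.

Definition has_degree (D : divisor) (d : int) : Prop :=
  exists sp : seq (C * C),
    [/\ uniq sp, (forall P, D.1 P != 0 -> P \in sp)
      & \sum_(P <- sp) D.1 P + D.2 = d].

Definition fun_div (n s : nat) (f p q : bipoly) (D : divisor) : Prop :=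
  [/\ ~ divides f p, ~ divides f q,
      (forall P, oncurve f P -> exists kp kq : nat,
          [/\ ord_at f P p kp, ord_at f P q kq & D.1 P = kp%:Z - kq%:Z]),
      (forall P, ~ oncurve f P -> D.1 P = 0)
    & (exists wp wq : nat,
          [/\ pweight n s f p wp, pweight n s f q wq & D.2 = wq%:Z - wp%:Z])].

Definition principal (n s : nat) (f : bipoly) (D : divisor) : Prop :=
  exists p q : bipoly, fun_div n s f p q D.

Definition lin_equiv (n s : nat) (f : bipoly) (D E : divisor) : Prop :=
  principal n s f (subD D E).

(* canonical divisor of an (n,s)-curve: the divisor (2g-2) infinity of the
   holomorphic differential dx / f_y *)
Definition canonical_div (n s : nat) : divisor := infD ((2 * genus n s)%:Z - 2).

(* non-special: l(K - D) = 0, i.e. no nonzero rational function h with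
   (h) + K - D >= 0 *)
Definition nonspecial (n s : nat) (f : bipoly) (D : divisor) : Prop :=
  forall (p q : bipoly) (E : divisor), fun_div n s f p q E ->
    ~ effective (subD (addD E (canonical_div n s)) D).

Definition zero_div (f R : bipoly) (Z : divisor) : Prop :=
  [/\ Z.2 = 0,
      (forall P, oncurve f P -> exists k : nat, ord_at f P R k /\ Z.1 P = k%:Z)
    & (forall P, ~ oncurve f P -> Z.1 P = 0)].

End NSCurves.
Arguments infD {C} k.
Arguments canonical_div {C} n s.

(* Main.v *)
Require Import Defs.
From mathcomp Require Import all_boot all_order all_algebra.
From mathcomp Require Import reals complex.
From mathcomp Require Import zify ring.
Import Order.TTheory GRing.Theory Num.Theory.
Local Open Scope ring_scope.
Set Implicit Arguments. Unset Strict Implicit.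

Section Aux.
Variable C : closedFieldType.

Lemma eval2_mapE (p : bipoly C) a b :
  eval2 p a b = (map_poly (horner_eval a) p).[b].
Proof.
have := horner_map (horner_eval a) p b%:P.
by rewrite /= !horner_evalE hornerC => ->.
Qed.

Lemma coef2_shift00 (p : bipoly C) a b : coef2 (shift2 p a b) 0 0 = eval2 p a b.
Proof.
rewrite /coef2 /shift2 -[(_ \Po _)`_0]horner_coef0 horner_comp !hornerE ?add0r.
rewrite -horner_coef0.
have := horner_map (horner_eval 0) (map_poly (fun c : {poly C} => c \Po ('X + a%:P)) p) b%:P.
rewrite /= !horner_evalE hornerC => <-.
rewrite eval2_mapE -map_poly_comp; congr (_.[b]); apply: eq_map_poly => c /=.
by rewrite !horner_evalE horner_comp !hornerE ?add0r.
Qed.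

Lemma eval2M (p q : bipoly C) a b : eval2 (p * q) a b = eval2 p a b * eval2 q a b.
Proof. by rewrite /eval2 !hornerM. Qed.

Lemma eval2B (p q : bipoly C) a b : eval2 (p - q) a b = eval2 p a b - eval2 q a b.
Proof. by rewrite /eval2 !hornerD !hornerN. Qed.

Lemma eval21 a b : eval2 (1 : bipoly C) a b = 1.
Proof. by rewrite /eval2 !hornerC. Qed.

Lemma not_div (f h : bipoly C) (n : nat) :
  h != 0 -> (size h <= n)%N -> (n < size f)%N -> ~ divides f h.
Proof.
move=> h0 hs fs [q hq]; move: h0 hs; rewrite hq.
have [->|q0] := eqVneq q 0; first by rewrite mul0r eqxx.
have f0 : f != 0 by apply: contraTneq fs => ->; rewrite size_poly0.
move=> _; rewrite size_mul //.
have : (0 < size q)%N by rewrite size_poly_gt0.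
case: (size q) => // m _; rewrite addSn /= => H.
by move: (leq_trans (leq_addl m (size f)) H); rewrite leqNgt fs.
Qed.

End Aux.

Lemma rep2g n s : (0 < n)%N -> coprime n s ->
  exists i j, (j <= n.-1)%N /\ (n * i + s * j = 2 * genus n s)%N.
Proof.
move=> n0 cop.
have ev : ~~ odd (n.-1 * s.-1).
  rewrite oddM; apply/negP => /andP [on os].
  have sp : (0 < s)%N by rewrite lt0n; apply: contraTneq os => ->.
  move: cop; rewrite /coprime => /eqP g1.
  have : (2 %| gcdn n s)%N.
    by rewrite dvdn_gcd !dvdn2 -(prednK n0) -(prednK sp) /= on os.
  by rewrite g1.
have e2 : (2 * genus n s = n.-1 * s.-1)%N.
  rewrite /genus mul2n -[RHS](odd_double_half (n.-1 * s.-1)).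
  by rewrite (negbTE ev).
have [a an] := Bezoutl s n0.
move: cop; rewrite /coprime => /eqP ->.
case/dvdnP => k hk.
exists k.-1, (n - a - 1)%N; rewrite e2; split; first lia.
clear ev e2.
have k0 : (0 < k)%N by case: k hk => // ; rewrite mul0n addnC.
have [K eK] : exists K, k = K.+1 by exists k.-1; rewrite prednK.
subst k.
rewrite /=.
have [m hm] : exists m, n = (a + 1 + m)%N by exists (n - a - 1)%N; lia.
subst n; rewrite /= in hk *.
have -> : (a + 1 + m - a - 1 = m)%N by lia.
case: s hk => [|s'] hk /=.
  nia.
nia.
Qed.

Theorem theorem1 (R : realType) (n s : nat) (f : {poly {poly R[i]}})
    (Dg : divisor R[i]) (R2g : {poly {poly R[i]}}) (Z : divisor R[i]) :
  ns_curve n s f ->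
  is_divisor f Dg -> effective Dg -> Dg.2 = 0 ->
  has_degree Dg (genus n s)%:Z ->
  nonspecial n s f Dg ->
  polyfun n s (2 * genus n s) R2g ->
  zero_div f R2g Z ->
  le_div Dg Z ->
  let Dstar := subD Z Dg in
  lin_equiv n s f (subD Dstar (infD (genus n s)%:Z))
                  (oppD (subD Dg (infD (genus n s)%:Z))).
Proof.
move=> [[n0 s0 cop] [fs fn fz fsing]] _ _ Dg2 _ _ [Rsz Rw R1] [Z2 Zon Zoff] _ Dstar.
have [i0 [j0 [hj0 hw0]]] := rep2g n0 cop.
have Rc : coef2 R2g i0 j0 = 1 by apply: R1.
have R0 : R2g != 0.
  by apply: contra_eq_neq Rc => ->; rewrite /coef2 coef0 coef0 eq_sym oner_neq0.
have fsz : (n < size f)%N.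
  rewrite ltnNge; apply/negP => hf.
  by move: fn; rewrite /coef2 (nth_default _ hf) coef0 => /eqP; rewrite eq_sym oppr_eq0 oner_eq0.
exists R2g, 1; rewrite /Dstar; split.
- exact: not_div R0 Rsz fsz.
- by apply: (not_div _ _ fsz); rewrite ?oner_neq0 ?size_poly1.
- move=> P onP; have [k [ordk Zk]] := Zon P onP.
  exists k, 0%N; split => //.
  + split.
      by exists 1, 0; split; [rewrite eval21 oner_neq0 | move=> i j].
    move=> [u [q [uP H]]]; have := H 0%N 0%N isT.
    rewrite coef2_shift00 eval2B !eval2M eval21 onP mulr0 subr0 mulr1.
    by move/eqP: uP.
  + rewrite /subD /addD /oppD /infD /= Zk; ring.
- by move=> P onP; rewrite /subD /addD /oppD /infD /= Zoff //; ring.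
- exists (2 * genus n s)%N, 0%N; split.
  + exists R2g, 0; split => //; first by rewrite mul0r addr0.
    by exists i0, j0; rewrite Rc oner_neq0.
  + exists 1, 0; split.
    * by rewrite mul0r addr0.
    * by rewrite size_poly1.
    * exact: oner_neq0.
    * by exists 0%N, 0%N; rewrite /coef2 coef1 /= coef1 /= oner_neq0 /wgt !muln0.
    * move=> i j; rewrite /coef2 coef1; case: j => [|j] /=.
        rewrite coef1; case: i => [|i] /=; first by rewrite /wgt !muln0.
        by rewrite eqxx.
      by rewrite coef0 eqxx.
  + rewrite /subD /addD /oppD /infD /= Z2 Dg2; lia.
Qed.
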